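(* Let $\eta\in(0,\pi/3)$. If $w_0<0$, then $w_0\in\triangle(0,z_2,z_3)\cap\triangle(0,\bar z_2,\bar z_3)$.
   Context: Let $a=\frac{e^{-i\eta}}{2\cos\eta}$, $c=\frac{1}{1-|a|^4}$, $z_k=ca^{k+1}$ for $k\ge0$, and $w_0=1-c|a|^2$ (a real number). For $u,v,w\in\mathbb{C}$, $\triangle(u,v,w)$ denotes the closed solid triangle with vertices $u,v,w$. *)

(* Defs.v *)
From Stdlib Require Import Reals Lra.
From Coquelicot Require Import Coquelicot.
Open Scope R_scope.

Definition expmi (eta : R) : C := (cos eta, - sin eta).

Definition a_ (eta : R) : C := Cdiv (expmi eta) (RtoC (2 * cos eta)).

Definition c_ (eta : R) : R := / (1 - (Cmod (a_ eta)) ^ 4).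

Definition z_ (eta : R) (k : nat) : C :=
  Cmult (RtoC (c_ eta)) (Cpow (a_ eta) (S k)).

Definition w0_ (eta : R) : R := 1 - c_ eta * (Cmod (a_ eta)) ^ 2.

Definition in_triangle (p u v w : C) : Prop :=
  exists s t r : R, 0 <= s /\ 0 <= t /\ 0 <= r /\ s + t + r = 1 /\
    p = Cplus (Cplus (Cmult (RtoC s) u) (Cmult (RtoC t) v)) (Cmult (RtoC r) w).

(* Main.v *)
Require Import Defs.
From Stdlib Require Import Reals Lra.
From Coquelicot Require Import Coquelicot.
Open Scope R_scope.
Lemma a_eq eta : cos eta <> 0 -> a_ eta = (/2, - (sin eta / cos eta) / 2).
Proof. intros H. unfold a_, expmi, Cdiv, Cinv, Cmult, RtoC; simpl.
apply injective_projections; simpl; field; auto. Qed.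
Lemma cos_gt eta : 0 < eta < PI/3 -> 1/2 < cos eta.
Proof. intros H. rewrite <- cos_PI3. apply cos_decreasing_1; try lra.
 all: pose proof PI_RGT_0; lra. Qed.
Lemma key (k : R) (Hk : k^2 < 3)
  (Hw : 1 - / (1 - ((1+k^2)/4)^2) * ((1+k^2)/4) < 0) :
  let a : C := (/2, -k/2) in let c := / (1 - ((1+k^2)/4)^2) in
  let w := 1 - c * ((1+k^2)/4) in
  in_triangle (RtoC w) (RtoC 0) (Cmult (RtoC c) (Cpow a 3)) (Cmult (RtoC c) (Cpow a 4)) /\
  in_triangle (RtoC w) (RtoC 0) (Cconj (Cmult (RtoC c) (Cpow a 3))) (Cconj (Cmult (RtoC c) (Cpow a 4))).
Proof.
  intros a c w.
  set (m := (1+k^2)/4) in *.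
  assert (Hm0 : 0 < m) by (unfold m; nra).
  assert (Hm1 : m < 1) by (unfold m; nra).
  set (x := / m).
  assert (Hx : 1 < x). { unfold x. rewrite <- Rinv_1. apply Rinv_lt_contravar; lra. }
  assert (Hxm : x * m = 1) by (unfold x; field; lra).
  assert (Hc : c = x^2 / (x^2 - 1)).
  { unfold c. replace m with (/x) by (unfold x; field; lra). field. split; nra. }
  assert (Hq : x^2 - x - 1 < 0).
  { assert (Hw' : w < 0) by exact Hw. clear Hw. rename Hw' into Hw. unfold w in Hw. rewrite Hc in Hw. replace m with (/x) in Hw by (unfold x; field; lra).
    assert (0 < x^2 - 1) by nra.
    replace (1 - x ^ 2 / (x ^ 2 - 1) * / x) with ((x^2-x-1)/(x^2-1)) in Hw by (field; nra).
    apply Rmult_lt_reg_r with (/(x^2-1)). apply Rinv_0_lt_compat; lra. lra. }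
  set (t := (x-2)*(x^2-x-1)). set (r := -(x-1)*(x^2-x-1)).
  assert (Ht : 0 <= t) by (unfold t; nra).
  assert (Hr : 0 <= r) by (unfold r; nra).
  assert (Hs : 0 <= 1 - t - r) by (unfold t, r; nra).
  assert (Hk2 : k^2 = 4*m - 1) by (unfold m; field).
  split; exists (1-t-r), t, r; (split; [lra|split; [lra|split; [lra|split; [lra|]]]]);
  unfold w, a, t, r; rewrite Hc; apply injective_projections; simpl; 
  assert (Hxk : x = 4/(1+k^2)) by (unfold x, m; field; nra);
  assert (Hd : (4 / (1 + k ^ 2))^2 - 1 <> 0) by (rewrite <- Hxk; nra);
  rewrite Hxk; unfold m; field; repeat split; try nra.
Qed.

Theorem lemma3p2 (eta : R) (Heta : 0 < eta < PI / 3) (Hw : w0_ eta < 0) :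
  in_triangle (RtoC (w0_ eta)) (RtoC 0) (z_ eta 2) (z_ eta 3) /\
  in_triangle (RtoC (w0_ eta)) (RtoC 0) (Cconj (z_ eta 2)) (Cconj (z_ eta 3)).
Proof.
  pose proof (cos_gt eta Heta) as HC.
  assert (HC0 : cos eta <> 0) by lra.
  set (k := sin eta / cos eta).
  assert (Hk : k^2 < 3).
  { unfold k. pose proof (sin2_cos2 eta) as H. unfold Rsqr in H.
    assert (Hs : sin eta ^2 = 1 - cos eta^2) by nra.
    replace ((sin eta / cos eta)^2) with (sin eta ^2 / cos eta ^2) by (field; auto).
    rewrite Hs. apply Rmult_lt_reg_r with (cos eta ^2). nra.
    unfold Rdiv. rewrite Rmult_assoc, Rinv_l by (apply pow_nonzero; auto). nra. }
  assert (Ha : a_ eta = (/2, -k/2)) by (unfold k; rewrite a_eq by auto; f_equal; field).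
  assert (Hm2 : Cmod (a_ eta) ^ 2 = (1+k^2)/4).
  { rewrite Ha. unfold Cmod. simpl fst; simpl snd. rewrite pow2_sqrt. field.
    nra. }
  assert (Hm4 : Cmod (a_ eta) ^ 4 = ((1+k^2)/4)^2) by (rewrite <- Hm2; ring).
  unfold w0_, z_, c_ in *. rewrite Hm2, Hm4 in *. rewrite Ha.
  exact (key k Hk Hw).
Qed.
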